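(* Let $r\ge2$ be an integer and $m,\ell$ positive integers with $2^m>r$ and $2^{m+\ell}>r^2$. Let $z\in\{0,1,\dots,r-1\}$, $j=j_0(z)$, and let $\mathcal L\subset\mathbb R^2$ be the lattice spanned by $(j,\tfrac12)$ and $(2^{m+\ell},0)$. Then, up to sign, the shortest non-zero vector of $\mathcal L$ is unique and equals $\vec u=(\alpha_0(z)/d,\ \tilde r/2)$ where $d=\gcd(r,z)$, $\tilde r=r/d$ and $\alpha_0(z)=rj_0(z)-2^{m+\ell}z$; in particular its second component is $\pm r/(2\gcd(r,z))$.
   Context: For real $f$, $\mathrm{round}(f)$ is the integer $f+\delta_f$ with $\delta_f\in(-1/2,1/2]$. For $z\in\{0,\dots,r-1\}$, $j_0(z)=\mathrm{round}(2^{m+\ell}z/r)$; then $\alpha_0(z)=rj_0(z)-2^{m+\ell}z\in(-r/2,r/2]$. Convention: $\gcd(r,0)=r$. Norms are Euclidean. *)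

(* Defs.v *)
From Stdlib Require Export Reals ZArith Lra Lia.
Open Scope R_scope.

(* round(f) = f + delta with delta in (-1/2, 1/2]:
   Stdlib's [up x] is the unique integer n with x < n <= x + 1,
   so up (f - 1/2) = n with n - f in (-1/2, 1/2]. *)
Definition round (f : R) : Z := up (f - / 2).

Definition twoPow (m l : nat) : Z := (2 ^ Z.of_nat (m + l))%Z.

Definition j0 (r : Z) (m l : nat) (z : Z) : Z :=
  round (IZR (twoPow m l) * IZR z / IZR r).

Definition alpha0 (r : Z) (m l : nat) (z : Z) : Z :=
  (r * j0 r m l z - twoPow m l * z)%Z.

Definition vnorm (v : R * R) : R := sqrt (fst v ^ 2 + snd v ^ 2).

Definition in_lattice (b1 b2 : R * R) (v : R * R) : Prop :=
  exists a b : Z,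
    v = (IZR a * fst b1 + IZR b * fst b2, IZR a * snd b1 + IZR b * snd b2).

(* Main.v *)
Require Import Defs.
From Stdlib Require Import Reals ZArith Lra Lia.
Open Scope R_scope.
Section KeySec.
Local Open Scope Z_scope.
Lemma fin_arith (r s X : Z) : s < 2*r ->
  (2*r - s + 1)*(2*r - s + 1) <= 4 * (X * X) -> 2*(r*r) < 4*(X*X) + s*s.
Proof.
  intros H1 H2. assert (H3 := Z.square_nonneg (r - s)). nia.
Qed.

Lemma key (r N j d rt zp A a b : Z) :
 2 <= r -> r*r < N -> 0 < d -> r = d*rt -> Z.gcd rt zp = 1 ->
 -r < 2*(d*A) <= r -> r*j - N*(d*zp) = d*A ->
 (a*j + b*N <> 0 \/ a <> 0) ->
 4*A*A + rt*rt <= 4*(a*j+b*N)*(a*j+b*N) + a*a /\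
 (4*A*A+rt*rt = 4*(a*j+b*N)*(a*j+b*N) + a*a ->
   (a*j+b*N = A /\ a = rt) \/ (a*j+b*N = -A /\ a = -rt)).
Proof.
  intros Hr HN Hd Hrt Hg HA Hj Hnz.
  set (x := a*j+b*N) in *.
  set (t := a*(d*zp) + b*r).
  assert (Hrx : r*x = a*(d*A) + N*t).
  { replace (r*x) with (a*(r*j) + b*N*r) by (unfold x; ring).
    replace (r*j) with (d*A + N*(d*zp)) by lia. unfold t; ring. }
  assert (Hrtp : 0 < rt) by nia.
  set (QU := 4*A*A + rt*rt).
  assert (HQU0 : 0 < QU) by (unfold QU; nia).
  assert (Hsq : (2*(d*A))*(2*(d*A)) <= r*r).
  { assert (0 <= (r - 2*(d*A))*(r + 2*(d*A))) by (apply Z.mul_nonneg_nonneg; lia). nia. }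
  assert (HQU1 : d*d*QU = (2*(d*A))*(2*(d*A)) + r*r) by (unfold QU; subst r; ring).
  assert (HQU : QU <= 2*(r*r)).
  { assert (0 <= (d*d-1)*QU) by (apply Z.mul_nonneg_nonneg; nia). nia. }
  destruct (Z.eq_dec t 0) as [Ht|Ht].
  - assert (Haz : a*zp = - b*rt).
    { apply (Z.mul_reg_l _ _ d); [lia|]. unfold t in Ht. subst r.
      replace (d*(a*zp)) with (a*(d*zp)) by ring. replace (d*(-b*rt)) with (-(b*(d*rt))) by ring. lia. }
    assert (Hdv : (rt | zp * a)).
    { exists (-b). rewrite Z.mul_comm, Haz. ring. }
    apply Z.gauss in Hdv; [|exact Hg].
    destruct Hdv as [k Hk].
    assert (Hxk : x = k*A).
    { apply (Z.mul_reg_l _ _ r); [lia|]. rewrite Hrx, Ht, Hk. subst r. ring. }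
    rewrite Hxk, Hk.
    assert (Hk0 : k <> 0) by (destruct Hnz; subst; lia).
    assert (Hkk : 1 <= k*k) by nia.
    replace (4*(k*A)*(k*A) + k*rt*(k*rt)) with (k*k*QU) by (unfold QU; ring).
    split; [nia|].
    intro E.
    assert (k*k = 1) by nia.
    assert (k = 1 \/ k = -1) by nia.
    destruct H0; subst k; [left|right]; split; ring.
  - assert (Hgoal : 2*(r*r) < 4*x*x + a*a).
    { destruct (Z_le_gt_dec (2*r) (Z.abs a)) as [Ha|Ha].
      + assert (4*(r*r) <= a*a) by (rewrite <- Z.abs_square; nia). nia.
      + assert (E1 : N <= Z.abs (N*t)) by (rewrite Z.abs_mul; nia).
        assert (E2 : Z.abs (N*t) <= r*Z.abs x + Z.abs a * Z.abs (d*A)).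
        { replace (N*t) with (r*x + (-a)*(d*A)) by lia.
          eapply Z.le_trans; [apply Z.abs_triangle|].
          rewrite !Z.abs_mul. replace (Z.abs (-a)) with (Z.abs a) by (rewrite Z.abs_opp; auto).
          rewrite (Z.abs_eq r) by lia. lia. }
        assert (E3 : 2*Z.abs (d*A) <= r) by lia.
        assert (E4a : Z.abs a * (2*Z.abs (d*A)) <= Z.abs a * r) by (apply Z.mul_le_mono_nonneg_l; lia).
        assert (E4 : 2*(r*r) < 2*r*Z.abs x + Z.abs a * r) by lia.
        assert (E5 : 2*r - Z.abs a < 2*Z.abs x).
        { assert (0 < r*(2*Z.abs x - (2*r - Z.abs a))) by lia.
          apply Z.lt_0_sub. eapply Z.mul_pos_cancel_l; [|exact H]; lia. }
        assert (E6 : (2*r - Z.abs a + 1)*(2*r - Z.abs a + 1) <= 4 * (Z.abs x * Z.abs x)).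
        { assert (0 <= 2*r - Z.abs a + 1) by lia.
          replace (4 * (Z.abs x * Z.abs x)) with ((2*Z.abs x)*(2*Z.abs x)) by ring.
          apply Z.mul_le_mono_nonneg; lia. }
        rewrite <- (Z.abs_square a), <- Z.mul_assoc, <- (Z.abs_square x).
        apply (fin_arith r (Z.abs a) (Z.abs x)); lia. }
    split; [lia|]. intro; lia.
Qed.
End KeySec.

Lemma vnorm_int (x y : Z) :
  vnorm (IZR x, IZR y / 2) = sqrt (IZR (4*x*x + y*y)%Z / 4).
Proof.
  unfold vnorm; cbn [fst snd]. f_equal. rewrite plus_IZR, !mult_IZR. field.
Qed.

Lemma round_bound (r N z : Z) : (0 < r)%Z ->
  (- r < 2 * (r * up (IZR N * IZR z / IZR r - / 2) - N * z) <= r)%Z.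
Proof.
  intros Hr.
  set (J := up (IZR N * IZR z / IZR r - / 2)).
  destruct (archimed (IZR N * IZR z / IZR r - / 2)) as [H1 H2].
  fold J in H1, H2.
  assert (Hr' : 0 < IZR r) by (apply IZR_lt; exact Hr).
  set (q := IZR N * IZR z / IZR r) in *.
  assert (Hq : q * IZR r = IZR N * IZR z) by (unfold q; field; lra).
  split.
  - apply lt_IZR. rewrite opp_IZR, mult_IZR, minus_IZR, !mult_IZR.
    assert (0 < (IZR J - q + /2) * IZR r) by (apply Rmult_lt_0_compat; lra).
    nra.
  - apply le_IZR. rewrite mult_IZR, minus_IZR, !mult_IZR.
    assert (0 <= (q + /2 - IZR J) * IZR r) by (apply Rmult_le_pos; lra).
    nra.
Qed.

Theorem lemma7 (r : Z) (m l : nat) (z : Z) :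
  (2 <= r)%Z -> (0 < m)%nat -> (0 < l)%nat ->
  (r < 2 ^ Z.of_nat m)%Z -> (r * r < twoPow m l)%Z ->
  (0 <= z < r)%Z ->
  let j := j0 r m l z in
  let b1 := (IZR j, / 2) in
  let b2 := (IZR (twoPow m l), 0) in
  let d := Z.gcd r z in
  let rt := (r / d)%Z in
  let u := (IZR (alpha0 r m l z) / IZR d, IZR rt / 2) in
  in_lattice b1 b2 u /\ u <> (0, 0) /\
  (forall v : R * R, in_lattice b1 b2 v -> v <> (0, 0) ->
     vnorm u <= vnorm v /\
     (vnorm v = vnorm u -> v = u \/ v = (- fst u, - snd u))) /\
  snd u = IZR r / (2 * IZR d).
Proof.
  intros Hr Hm Hl Hrm HN Hz j b1 b2 d rt u.
  set (N := twoPow m l) in *.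
  assert (Hd0 : (0 <= d)%Z) by apply Z.gcd_nonneg.
  assert (Hd : (0 < d)%Z).
  { destruct (Z.eq_dec d 0) as [E|E]; [|lia].
    apply Z.gcd_eq_0_l in E. lia. }
  destruct (Z.gcd_divide_l r z) as [rt' Hrt'].
  destruct (Z.gcd_divide_r r z) as [zp Hzp].
  fold d in Hrt', Hzp.
  assert (Hrt : rt = rt') by (unfold rt; rewrite Hrt'; apply Z.div_mul; lia).
  assert (Hg : Z.gcd rt zp = 1%Z).
  { assert (E := Z.gcd_div_gcd r z d ltac:(lia) eq_refl).
    rewrite Hzp, Z.div_mul in E by lia. exact E. }
  assert (Hb := round_bound r N z ltac:(lia)).
  fold N in Hb.
  assert (HJ : j = up (IZR N * IZR z / IZR r - / 2)) by reflexivity.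
  rewrite <- HJ in Hb.
  set (A := (rt * j - N * zp)%Z).
  assert (Hal : alpha0 r m l z = (d * A)%Z).
  { unfold alpha0, A. fold j N. rewrite Hrt, Hrt', Hzp. ring. }
  assert (Hdr : IZR d <> 0) by (apply not_0_IZR; lia).
  assert (Hu1 : fst u = IZR A).
  { simpl. rewrite Hal, mult_IZR. field. exact Hdr. }
  assert (Hu : u = (IZR A, IZR rt / 2)).
  { rewrite <- Hu1. reflexivity. }
  assert (Hrtp : (0 < rt)%Z) by nia.
  assert (Hkey := fun a b => key r N j d rt zp A a b Hr HN Hd
     ltac:(rewrite Hrt; lia) Hg ltac:(rewrite <- Hal; exact Hb)
     ltac:(rewrite <- Hal; unfold alpha0; fold j N; rewrite Hzp; ring)).
  split; [|split; [|split]].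
  - exists rt, (- zp)%Z. rewrite Hu. unfold b1, b2; simpl. fold N.
    f_equal.
    + unfold A. rewrite minus_IZR, !mult_IZR, opp_IZR. ring.
    + field.
  - rewrite Hu. intro E. injection E as _ E.
    assert (IZR rt = 0) by lra. apply eq_IZR in H. lia.
  - intros v [a [b Hv]] Hv0.
    unfold b1, b2 in Hv; simpl in Hv. fold N in Hv.
    assert (Hv' : v = (IZR (a*j+b*N), IZR a / 2)).
    { rewrite Hv, plus_IZR, !mult_IZR. f_equal; field. }
    assert (Hnz : (a*j+b*N <> 0 \/ a <> 0)%Z).
    { destruct (Z.eq_dec a 0) as [Ea|Ea]; [left|right; exact Ea].
      intro E. apply Hv0. rewrite Hv', E, Ea. f_equal; simpl; lra. }
    destruct (Hkey a b Hnz) as [K1 K2].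
    rewrite Hu, Hv', !vnorm_int. split.
    + apply sqrt_le_1_alt. apply IZR_le in K1. lra.
    + intro E. apply sqrt_inj in E.
      2: { apply Rmult_le_pos; [apply IZR_le; nia|lra]. }
      2: { apply Rmult_le_pos; [apply IZR_le; nia|lra]. }
      assert (E' : IZR (4 * (a * j + b * N) * (a * j + b * N) + a * a) =
                   IZR (4 * A * A + rt * rt)) by lra.
      apply eq_IZR in E'.
      destruct (K2 (eq_sym E')) as [[X Y]|[X Y]]; [left|right]; rewrite X, Y.
      * reflexivity.
      * simpl. rewrite !opp_IZR. f_equal; field.
  - rewrite Hu. simpl. rewrite Hrt'. rewrite mult_IZR. rewrite <- Hrt. field. exact Hdr.
Qed.
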